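(* Let $\tau\ge 1$ be an integer and $0<\kappa\le 1$. Let $\mathcal{B}=(B_1,\ldots,B_K)$ be a blockade in a graph, of width $W$. Then there is an equicardinal $(\kappa,\tau)$-support-invariant contraction $\mathcal{B}'=(B_1',\ldots,B_K')$ of $\mathcal{B}$ with width at least $\kappa^{2^K\tau^\tau}W$.
   Context: A blockade in a graph $G$ is a sequence $\mathcal{B}=(B_i:i\in I)$ of pairwise disjoint nonempty subsets of $V(G)$ (blocks), $I$ a finite set of integers; its length is $|I|$, its width is $\min_i|B_i|$; it is equicardinal if all blocks have the same cardinality. A contraction of $\mathcal{B}$ is a blockade $(B_i':i\in I)$ with $\emptyset\ne B_i'\subseteq B_i$ for all $i$. An induced subgraph $H$ of $G$ is $\mathcal{B}$-rainbow if each vertex of $H$ lies in some block and no two lie in the same block; its support is the set of $i\in I$ with $V(H)\cap B_i\neq\emptyset$. The $\mathcal{B}$-ordering of a $\mathcal{B}$-rainbow $H$ is the linear order on $V(H)$ with $u<v$ if $u\in B_i$, $v\in B_j$, $i<j$. An ordered graph is a graph with a linear order of its vertex set; a $\mathcal{B}$-rainbow $H$ is a copy of an ordered graph $J$ if $H$ with its $\mathcal{B}$-ordering is isomorphic to $J$ as ordered graphs. The trace of an ordered graph $J$ relative to $\mathcal{B}$ is the set of supports of all $\mathcal{B}$-rainbow copies of $J$. For $0<\kappa\le1$ and integer $\tau\ge1$, $\mathcal{B}$ is $(\kappa,\tau)$-support-invariant if for every contraction $\mathcal{B}'$ of $\mathcal{B}$ of width at least $\kappa$ times the width of $\mathcal{B}$,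 and every ordered tree $J$ with $|J|\le\tau$, the trace of $J$ relative to $\mathcal{B}$ equals the trace of $J$ relative to $\mathcal{B}'$. *)

(* Defs.v *)
From HB Require Import structures.
From mathcomp Require Import all_boot all_order all_algebra.
Set Implicit Arguments. Unset Strict Implicit. Unset Printing Implicit Defensive.
Import Order.TTheory GRing.Theory Num.Theory.

(* A graph: vertex type T : finType, adjacency e : rel T (symmetric, irreflexive). *)

Definition blockade (T : finType) (K : nat) (B : 'I_K -> {set T}) : Prop :=
  (forall i, B i != set0) /\ (forall i j, i != j -> [disjoint B i & B j]).

(* width = min_i |B_i| (the default value #|T| only matters when K = 0) *)
Definition width (T : finType) (K : nat) (B : 'I_K -> {set T}) : nat :=
  \big[minn/#|T|]_(i < K) #|B i|.

Definition contraction (T : finType) (K : nat) (B' B : 'I_K -> {set T}) : Prop :=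
  blockade B' /\ (forall i, B' i \subset B i).

Definition equicardinal (T : finType) (K : nat) (B : 'I_K -> {set T}) : Prop :=
  forall i j, #|B i| = #|B j|.

Definition width_at_least (R : realFieldType) (T : finType) (K : nat)
  (B : 'I_K -> {set T}) (x : R) : Prop :=
  (forall i, x <= (#|B i|)%:R)%R.

(* An ordered graph on n vertices: vertex set 'I_n with its natural order,
   adjacency J : rel 'I_n. *)
Definition ordered_tree (n : nat) (J : rel 'I_n) : Prop :=
  [/\ 0 < n, symmetric J, irreflexive J,
      (forall a b, connect J a b) &
      (forall c : seq 'I_n, ucycle J c -> size c < 3)].

(* A B-rainbow copy of the ordered graph J: an induced subgraph H of G with
   vertices f a (a : 'I_n), f a lying in block idx a, with idx strictly
   increasing (so distinct blocks, and the B-ordering of H matches the order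
   of 'I_n), and adjacency in G of f a, f b equal to J a b.
   Its support is the image of idx. *)
Definition rainbow_copy (T : finType) (e : rel T) (K : nat) (B : 'I_K -> {set T})
  (n : nat) (J : rel 'I_n) (f : 'I_n -> T) (idx : 'I_n -> 'I_K) : Prop :=
  [/\ (forall a, f a \in B (idx a)),
      (forall a b : 'I_n, (a < b)%N -> (idx a < idx b)%N) &
      (forall a b, e (f a) (f b) = J a b)].

Definition in_trace (T : finType) (e : rel T) (K : nat) (B : 'I_K -> {set T})
  (n : nat) (J : rel 'I_n) (S : {set 'I_K}) : Prop :=
  exists f idx, rainbow_copy e B J f idx /\ S = [set idx a | a in 'I_n].

Definition support_invariant (R : realFieldType) (T : finType) (e : rel T)
  (kappa : R) (tau : nat) (K : nat) (B : 'I_K -> {set T}) : Prop :=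
  forall B' : 'I_K -> {set T}, contraction B' B ->
    width_at_least B' (kappa * (width B)%:R)%R ->
    forall (n : nat) (J : rel 'I_n), ordered_tree J -> (n <= tau)%N ->
      forall S : {set 'I_K}, in_trace e B J S <-> in_trace e B' J S.

(* Main.v *)
Require Import Defs.
From HB Require Import structures.
From mathcomp Require Import all_boot all_order all_algebra.
From Stdlib Require Import ClassicalEpsilon Classical.
Import Order.TTheory GRing.Theory Num.Theory.
Set Implicit Arguments. Unset Strict Implicit. Unset Printing Implicit Defensive.

Lemma first_hit (T : eqType) (P : pred T) (s : seq T) : has P s ->
  exists s1 x s2, [/\ s = s1 ++ x :: s2, P x & ~~ has P s1].
Proof.
elim: s => [//|y s IH] /=.
case Py: (P y) => /= H.
  by exists [::], y, s.
have [s1 [x [s2 [E Px Hn]]]] := IH H.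
by exists (y :: s1), x, s2; rewrite E /= Py.
Qed.

Lemma prefix_path (T : eqType) (J : rel T) x s s1 w s2 :
  path J x s -> x :: s = s1 ++ w :: s2 ->
  exists s', [/\ s1 ++ [:: w] = x :: s', path J x s' & last x s' = w].
Proof.
case: s1 => [|y s1] /= Hp [].
  by move=> -> _; exists [::].
move=> <- Es; exists (s1 ++ [:: w]); split=> //.
  move: Hp; rewrite Es !cat_path /= => /andP[-> /andP[-> _]] //.
by rewrite last_cat.
Qed.

Lemma cycle_lemma (T : eqType) (J : rel T) (Jsym : symmetric J) u v a b :
  path J u a -> path J v b -> uniq (u :: a) -> uniq (v :: b) ->
  last u a = last v b -> J u v -> u != v ->
  head u a != v -> head v b != u ->
  exists c, ucycle J c /\ (2 < size c)%N.
Proof.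
move=> pa pb ua ub El Juv nuv ha hb.
have hasA : has (mem (u :: a)) (v :: b).
  apply/hasP; exists (last v b); first exact: mem_last.
  rewrite -El; exact: mem_last.
have [b1 [w [b2 [EB wA nh]]]] := first_hit hasA.
have hw : has (pred1 w) (u :: a) by apply/hasP; exists w => //=.
have [a1 [w' [a2 [EA /eqP ew _]]]] := first_hit hw.
subst w'.
have [a' [Ea' pa' la']] := prefix_path pa EA.
have [b' [Eb' pb' lb']] := prefix_path pb EB.
exists (a1 ++ w :: rev b1); split; last first.
  case: a1 EA {Ea'} => [|y [|y' a1]] /= EA.
  - case: EA => Euw Ea.
    case: b1 EB {Eb' nh} => [|x [|x' b1]] /= EB.
    + by case: EB => Evw _; move: nuv; rewrite Euw Evw eqxx.
    + by case: EB => _ Eb; move: hb; rewrite Eb /= Euw eqxx.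
    + by rewrite size_rev.
  - case: EA => _ Ea.
    case: b1 EB {Eb' nh} => [|x b1] /= EB.
    + by case: EB => Evw _; move: ha; rewrite Ea /= Evw eqxx.
    + by rewrite size_rev.
  - by rewrite size_cat /= addnS.
apply/andP; split.
  have -> : a1 ++ w :: rev b1 = u :: (a' ++ rev b1).
    by rewrite -cat1s catA Ea'.
  rewrite /= rcons_cat cat_path pa' la' /=.
  have Eb1 : b1 = belast v b'.
    by move: Eb'; rewrite cats1 lastI lb' => /rcons_inj [].
  have pr : path J w (rev b1).
    rewrite Eb1 -lb' rev_path.
    by rewrite (eq_path (e' := J)) // => p q; rewrite Jsym.
  rewrite -cats1 cat_path pr /= andbT.
  have -> : last w (rev b1) = v.
    move: Eb'; case: b1 {Eb1 pr nh EB} => [|x b1] /=.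
      by case.
    by case=> ->; rewrite rev_cons last_rcons.
  by rewrite Jsym.
have uA : uniq (a1 ++ [:: w]).
  by move: ua; rewrite EA -cat1s catA cat_uniq => /andP[].
have uB : uniq b1 by move: ub; rewrite EB cat_uniq => /andP[].
rewrite -cat1s catA cat_uniq uA rev_uniq uB andbT /=.
apply/hasPn => x; rewrite mem_rev => xb1.
apply/negP => xa.
have xA : x \in u :: a by rewrite EA -cat1s catA mem_cat xa.
by move/hasPn: nh => /(_ x xb1) /negP; apply.
Qed.

Lemma tree_code n (J : rel 'I_n) : ordered_tree J ->
  exists c : 'I_n -> 'I_n, forall u v, J u v = (u != v) && ((c u == v) || (c v == u)).
Proof.
case=> n0 Jsym Jirr Jcon Jac.
pose r := Ordinal n0.
have ex u : exists s, path J u s && (last u s == r) && uniq (u :: s).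
  have /connectP [p pp lp] := Jcon u r.
  rewrite lp; case: (shortenP pp) => p' pp' up' _.
  by exists p'; rewrite pp' up' eqxx.
pose sp u := xchoose (ex u).
have spP u : path J u (sp u) && (last u (sp u) == r) && uniq (u :: sp u).
  exact: (xchooseP (ex u)).
have hd u v : head u (sp u) = v -> u != v -> J u v.
  move=> h nuv; have /andP [/andP [p _] _] := spP u.
  move: h p nuv; case: (sp u) => [|x s] /= -> //.
  by rewrite eqxx.
  by case/andP.
exists (fun u => head u (sp u)) => u v.
case Juv: (J u v).
  have nuv : u != v by apply: contraTneq Juv => ->; rewrite Jirr.
  rewrite nuv /=; apply/esym/negPn/negP => /norP [h1 h2].
  have /andP [/andP [p1 /eqP l1] u1] := spP u.
  have /andP [/andP [p2 /eqP l2] u2] := spP v.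
  have [c [uc sc]] := cycle_lemma Jsym p1 p2 u1 u2 (etrans l1 (esym l2)) Juv nuv h1 h2.
  by move: (Jac c uc); rewrite ltnNge sc.
apply/esym/negbTE/negP => /andP [nuv /orP [/eqP h | /eqP h]].
  by rewrite (hd _ _ h nuv) in Juv.
by rewrite Jsym (hd _ _ h) 1?eq_sym in Juv.
Qed.

Definition dec (P : Prop) : bool := if excluded_middle_informative P then true else false.
Lemma decP (P : Prop) : dec P <-> P.
Proof. by rewrite /dec; case: excluded_middle_informative. Qed.

Definition is_code (t n : nat) (J : rel 'I_n) (c : {ffun 'I_t.+1 -> 'I_t.+1}) : Prop :=
  forall u v : 'I_n, J u v = (u != v) &&
    ((val (c (inord u)) == val v) || (val (c (inord v)) == val u)).
Arguments is_code t {n} J c.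

Lemma code_exists t n (J : rel 'I_n) : (n <= t.+1)%N -> ordered_tree J ->
  exists c, is_code t J c.
Proof.
move=> nt tJ; have [c0 Hc] := tree_code tJ.
exists [ffun i : 'I_t.+1 => inord (if insub (val i) is Some u then val (c0 u) else 0%N) : 'I_t.+1].
have E (u : 'I_n) : val ([ffun i : 'I_t.+1 => inord (if insub (val i) is Some u then val (c0 u) else 0%N) : 'I_t.+1] (inord u)) = val (c0 u).
  have hu : (u < t.+1)%N := leq_trans (ltn_ord u) nt.
  have hc : (c0 u < t.+1)%N := leq_trans (ltn_ord _) nt.
  by rewrite ffunE /= (inordK hu) valK (inordK hc).
by move=> u v; rewrite !E !val_eqE Hc.
Qed.

Lemma trace_mono (T : finType) (e : rel T) K (B B' : 'I_K -> {set T}) n (J : rel 'I_n) S :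
  (forall i, B' i \subset B i) -> in_trace e B' J S -> in_trace e B J S.
Proof.
move=> sub [f [idx [[h1 h2 h3] ES]]]; exists f, idx; split=> //; split=> //.
by move=> a; apply: (subsetP (sub _)).
Qed.

Lemma trace_ext (T : finType) (e : rel T) K (B : 'I_K -> {set T}) n (J J' : rel 'I_n) S :
  (forall u v, J u v = J' u v) -> in_trace e B J S -> in_trace e B J' S.
Proof.
move=> EJ [f [idx [[h1 h2 h3] ES]]]; exists f, idx; split=> //; split=> //.
by move=> a b; rewrite h3 EJ.
Qed.

Lemma trace_card (T : finType) (e : rel T) K (B : 'I_K -> {set T}) n (J : rel 'I_n) S :
  in_trace e B J S -> #|S| = n.
Proof.
move=> [f [idx [[h1 h2 h3] ->]]]; rewrite card_imset ?card_ord //.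
move=> a b Eab; apply: val_inj; case: (ltngtP a b) => [h|h|//].
  by have := h2 _ _ h; rewrite Eab ltnn.
by have := h2 _ _ h; rewrite Eab ltnn.
Qed.

Lemma big_minn_le (T : finType) (I : eqType) (s : seq I) (F : I -> nat) x0 i :
  i \in s -> (\big[minn/x0]_(j <- s) F j <= F i)%N.
Proof.
elim: s => [//|y s IH]; rewrite inE big_cons => /orP [/eqP -> | /IH h].
  exact: geq_minl.
exact: leq_trans (geq_minr _ _) h.
Qed.

Lemma width_le (T : finType) K (B : 'I_K -> {set T}) i : (width B <= #|B i|)%N.
Proof. exact: (big_minn_le T _ _ (mem_index_enum i)). Qed.

Lemma width_le_card (T : finType) K (B : 'I_K -> {set T}) : (width B <= #|T|)%N.
Proof.
rewrite /width; elim/big_ind: _ => //.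
  by move=> x y hx _; exact: leq_trans (geq_minl _ _) hx.
by move=> i _; exact: max_card.
Qed.

Lemma width_ge (R : realFieldType) (T : finType) K (B : 'I_K -> {set T}) (x : R) :
  (x <= #|T|%:R)%R -> (forall i, x <= #|B i|%:R)%R -> (x <= (width B)%:R)%R.
Proof.
move=> h0 hi; rewrite /width; elim/big_ind: _ => // a b ha hb.
by case: (leqP a b).
Qed.

Lemma width_gt0 (T : finType) K (B : 'I_K -> {set T}) : blockade B -> (0 < K)%N -> (0 < width B)%N.
Proof.
move=> [ne _] K0; have /set0Pn [x xB] := ne (Ordinal K0).
rewrite /width; elim/big_ind: _ => //.
  by apply/card_gt0P; exists x.
  by move=> a b ha hb; rewrite leq_min ha hb.
by move=> i _; rewrite card_gt0.
Qed.

Lemma sub_card (T : finType) (A : {set T}) k : (k <= #|A|)%N ->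
  exists S : {set T}, S \subset A /\ #|S| = k.
Proof.
elim: k => [|k IH] h; first by exists set0; rewrite sub0set cards0.
have [S [SA cS]] := IH (ltnW h).
have : (0 < #|A :\: S|)%N by rewrite cardsD (setIidPr SA) cS subn_gt0.
case/card_gt0P => x; rewrite inE => /andP [xS xA].
exists (x |: S); rewrite cardsU1 xS cS; split=> //.
by rewrite subUset sub1set xA SA.
Qed.

Lemma trim (T : finType) K (B : 'I_K -> {set T}) : blockade B ->
  exists B3 : 'I_K -> {set T}, contraction B3 B /\ forall i, #|B3 i| = width B.
Proof.
move=> hB.
have ex i : exists S : {set T}, S \subset B i /\ #|S| = width B.
  exact: sub_card (width_le B i).
have [B3 H3] := fin_all_exists ex.
exists B3; split; last by move=> i; case: (H3 i).
split; last by move=> i; case: (H3 i).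
split.
  move=> i; rewrite -card_gt0 (proj2 (H3 i)); apply: width_gt0 hB _.
  exact: leq_ltn_trans (leq0n _) (ltn_ord i).
move=> i j nij; apply: (disjointW (proj1 (H3 i)) (proj1 (H3 j))).
by apply: (proj2 hB).
Qed.

Definition Pot (T : finType) (e : rel T) (t K : nat) (B : 'I_K -> {set T}) :
  {set {set 'I_K} * {ffun 'I_t.+1 -> 'I_t.+1}} :=
  [set x | dec (exists n (J : rel 'I_n),
     [/\ (n <= t.+1)%N, ordered_tree J, in_trace e B J x.1 & is_code t J x.2])].
Arguments Pot T e t {K} B.

Lemma Pot_sub (T : finType) (e : rel T) t K (B B' : 'I_K -> {set T}) :
  (forall i, B' i \subset B i) -> Pot T e t B' \subset Pot T e t B.
Proof.
move=> sub; apply/subsetP => x; rewrite !inE => /decP [n [J [h1 h2 h3 h4]]].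
apply/decP; exists n, J; split=> //; exact: trace_mono sub h3.
Qed.

Lemma Pot_lt (T : finType) (e : rel T) t K (B B' : 'I_K -> {set T}) n (J : rel 'I_n) S :
  (forall i, B' i \subset B i) -> (n <= t.+1)%N -> ordered_tree J ->
  in_trace e B J S -> ~ in_trace e B' J S ->
  (#|Pot T e t B'| < #|Pot T e t B|)%N.
Proof.
move=> sub nt tJ hT hN; apply: proper_card; rewrite properE Pot_sub //=.
have [c hc] := code_exists nt tJ.
apply/subsetPn; exists (S, c).
  by rewrite inE; apply/decP; exists n, J.
rewrite inE; apply/negP => /decP [n' [J' [h1 h2 h3 h4]]].
have En : n' = n by rewrite -(trace_card h3) (trace_card hT).
subst n'; apply: hN; apply: trace_ext h3 => u v.
by rewrite (h4 u v) (hc u v).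
Qed.

Local Open Scope ring_scope.

Lemma contr_trans (T : finType) K (B1 B2 B3 : 'I_K -> {set T}) :
  contraction B1 B2 -> (forall i, B2 i \subset B3 i) -> contraction B1 B3.
Proof.
move=> [b s] s'; split=> // i; exact: subset_trans (s i) (s' i).
Qed.

Lemma main_ind (R : realFieldType) (T : finType) (e : rel T) t (kappa : R)
  (hk0 : 0 < kappa) (hk1 : kappa <= 1) K (m : nat) :
  forall B : 'I_K -> {set T}, (#|Pot T e t B| <= m)%N -> blockade B -> equicardinal B ->
  exists B' : 'I_K -> {set T},
    [/\ contraction B' B, equicardinal B', support_invariant e kappa t.+1 B' &
        forall i, kappa ^+ #|Pot T e t B| * (width B)%:R <= #|B' i|%:R].
Proof.
have hk0' : 0 <= kappa by exact: ltW.
elim: m => [|m IH] B hm hB hE.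
all: case: (classic (support_invariant e kappa t.+1 B)) => [si|nsi].
1,3: exists B; split=> // i.
1,2: apply: le_trans (_ : 1 * (width B)%:R <= _).
1,3: by apply: ler_wpM2r; [exact: ler0n | exact: exprn_ile1].
1,2: by rewrite mul1r ler_nat width_le.
-
  exfalso; apply: nsi => B'' cB wB n J tJ nt S; split; last exact: trace_mono (proj2 cB).
  move=> hT; apply: NNPP => hN.
  by have := leq_trans (Pot_lt (proj2 cB) nt tJ hT hN) hm.
have [B'' [cB [wB [n [J [tJ [nt [S nS]]]]]]]] :
  exists B'' : 'I_K -> {set T}, contraction B'' B /\
    width_at_least B'' (kappa * (width B)%:R) /\
    exists n (J : rel 'I_n), ordered_tree J /\ (n <= t.+1)%N /\
      exists S, ~ (in_trace e B J S <-> in_trace e B'' J S).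
  apply: NNPP => H; apply: nsi => B'' cB wB n J tJ nt S; apply: NNPP => H2; apply: H.
  by exists B''; split=> //; split=> //; exists n, J; split=> //; split=> //; exists S.
have [hT hN] : in_trace e B J S /\ ~ in_trace e B'' J S.
  case: (classic (in_trace e B'' J S)) => h.
    by exfalso; apply: nS; split=> // _; exact: trace_mono (proj2 cB) h.
  case: (classic (in_trace e B J S)) => h'; first by [].
  by exfalso; apply: nS; split=> a.
have [B3 [cB3 hB3]] := trim (proj1 cB).
have s3 : forall i, B3 i \subset B i := fun i => subset_trans (proj2 cB3 i) (proj2 cB i).
have lt : (#|Pot T e t B3| < #|Pot T e t B|)%N.
  exact: Pot_lt s3 nt tJ hT (fun h => hN (trace_mono (proj2 cB3) h)).
have [B4 [c4 eq4 si4 b4]] := IH B3 (leq_trans lt hm) (proj1 cB3) (fun i j => etrans (hB3 i) (esym (hB3 j))).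
exists B4; split => //; first exact: contr_trans c4 s3.
move=> i; apply: le_trans (b4 i).
have kW : kappa * (width B)%:R <= #|T|%:R.
  apply: le_trans (_ : (width B)%:R <= _); first by rewrite ler_piMl // ler0n.
  by rewrite ler_nat width_le_card.
have W3 : kappa * (width B)%:R <= (width B3)%:R.
  apply: width_ge => // j; rewrite hB3; exact: width_ge.
rewrite -(subnK lt) exprD exprSr -!mulrA.
apply: le_trans (_ : 1 * (kappa ^+ #|Pot T e t B3| * (kappa * (width B)%:R)) <= _).
  apply: ler_wpM2r; last exact: exprn_ile1.
  by rewrite mulr_ge0 ?exprn_ge0 // mulr_ge0.
by rewrite mul1r; apply: ler_wpM2l; [exact: exprn_ge0 | exact: W3].
Qed.

Unset Implicit Arguments.

Theorem theorem4p1 (R : realFieldType) (T : finType) (e : rel T)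
  (e_sym : symmetric e) (e_irr : irreflexive e)
  (tau : nat) (kappa : R) (htau : (1 <= tau)%N)
  (hk0 : 0 < kappa) (hk1 : kappa <= 1)
  (K : nat) (B : 'I_K -> {set T}) (hB : blockade B) :
  exists B' : 'I_K -> {set T},
    [/\ contraction B' B, equicardinal B',
        support_invariant e kappa tau B' &
        width_at_least B' (kappa ^+ (2 ^ K * tau ^ tau) * (width B)%:R)].
Proof.
case: tau htau => [//|t] _.
have [B0 [cB0 hB0]] := trim hB.
have [B' [c' eq' si' b']] := @main_ind R T e t kappa hk0 hk1 K _ B0 (leqnn _) (proj1 cB0)
  (fun i j => etrans (hB0 i) (esym (hB0 j))).
exists B'; split=> //; first exact: contr_trans c' (proj2 cB0).
move=> i; apply: le_trans (b' i).
have hc : (#|Pot T e t B0| <= 2 ^ K * t.+1 ^ t.+1)%N.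
  apply: leq_trans (max_card _) _.
  by rewrite card_prod card_ffun !card_ord -cardsT -powersetT card_powerset cardsT card_ord.
have W0 : (width B)%:R <= (width B0)%:R :> R.
  apply: width_ge => [|j]; first by rewrite ler_nat width_le_card.
  by rewrite hB0.
apply: le_trans (_ : kappa ^+ #|Pot T e t B0| * (width B)%:R <= _).
  by apply: ler_wpM2r; [exact: ler0n | apply: ler_wiXn2l => //; exact: ltW].
by apply: ler_wpM2l => //; rewrite exprn_ge0 // ltW.
Qed.
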